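(* Let $\hbar>0$ and, on the Schwartz space $\mathcal{S}(\mathbb{R}^3)$, let $\widehat{x}_j$ be multiplication by $x_j$ and $\widehat{p}_j=-i\hbar\,\partial_{x_j}$ for $j=1,2,3$ (so $[\widehat{x}_j,\widehat{p}_k]=i\hbar\,\delta_{jk}$ and all other pairs commute). Consider the classical angular momentum $l=(l_1,l_2,l_3)=(x_2p_3-x_3p_2,\;x_3p_1-x_1p_3,\;x_1p_2-x_2p_1)$ and the polynomial $l^2=l_1^2+l_2^2+l_3^2$ in $(x,p)\in\mathbb{R}^3\times\mathbb{R}^3$. Let $\widehat{l}=(\widehat{x}_2\widehat{p}_3-\widehat{x}_3\widehat{p}_2,\;\widehat{x}_3\widehat{p}_1-\widehat{x}_1\widehat{p}_3,\;\widehat{x}_1\widehat{p}_2-\widehat{x}_2\widehat{p}_1)$ and $\widehat{l}^{\,2}=\widehat{l}_1^{\,2}+\widehat{l}_2^{\,2}+\widehat{l}_3^{\,2}$. Then the Born--Jordan quantization of $l^2$ satisfies $$\mathrm{Op}_{\mathrm{BJ}}(l^2)=\widehat{l}^{\,2}+2\hbar^2 .$$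
   Context: Shubin $\tau$-ordering: for a real parameter $\tau$ and non-negative integers $m,n$, in one variable $\mathrm{Op}_\tau(x^m p^n)=\sum_{k=0}^{n}\binom{n}{k}\tau^{n-k}(1-\tau)^k\,\widehat{p}^{\,k}\widehat{x}^{\,m}\widehat{p}^{\,n-k}$. For a monomial in several variables $x^\alpha p^\beta=\prod_{j} x_j^{\alpha_j}p_j^{\beta_j}$, $\mathrm{Op}_\tau(x^\alpha p^\beta)=\prod_j \mathrm{Op}_\tau(x_j^{\alpha_j}p_j^{\beta_j})$ (the factors for different indices $j$ commute), extended linearly to polynomials. The Born--Jordan quantization is $\mathrm{Op}_{\mathrm{BJ}}(a)=\int_0^1 \mathrm{Op}_\tau(a)\,d\tau$ for polynomials $a(x,p)$; in one variable this gives $\mathrm{Op}_{\mathrm{BJ}}(x^m p^n)=\frac{1}{m+1}\sum_{k=0}^m \widehat{x}^{\,m-k}\widehat{p}^{\,n}\widehat{x}^{\,k}$. Here $l^2$ is regarded as the expanded polynomial, e.g. $l_3^2=x_1^2p_2^2+x_2^2p_1^2-2x_1p_1x_2p_2$. *)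

(* Defs.v *)
From HB Require Import structures.
From mathcomp Require Import all_boot all_order all_algebra.
From mathcomp Require Import all_classical all_reals all_analysis.
From mathcomp Require Import complex.
Set Implicit Arguments. Unset Strict Implicit. Unset Printing Implicit Defensive.
Import Order.TTheory GRing.Theory Num.Theory.
Local Open Scope ring_scope.
Local Open Scope complex_scope.

(* A monomial x^alpha p^beta in (x,p) in R^3 x R^3: exponents (alpha, beta). *)
Definition mono := (('I_3 -> nat) * ('I_3 -> nat))%type.

Definition mono_mul (m1 m2 : mono) : mono :=
  (fun j => m1.1 j + m2.1 j, fun j => m1.2 j + m2.2 j)%N.

(* A real polynomial a(x,p) given as a finite formal sum of terms coef * monomial.
   All maps below are linear in the terms, so they are well defined on polynomials. *)
Definition cpoly (R : realType) := seq (R * mono).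

Definition cpoly_add (R : realType) (a b : cpoly R) : cpoly R := a ++ b.
Definition cpoly_scale (R : realType) (c : R) (a : cpoly R) : cpoly R :=
  [seq (c * t.1, t.2) | t <- a].
Definition cpoly_sub (R : realType) (a b : cpoly R) : cpoly R :=
  cpoly_add a (cpoly_scale (-1) b).
Definition cpoly_mul (R : realType) (a b : cpoly R) : cpoly R :=
  [seq (s.1 * t.1, mono_mul s.2 t.2) | s <- a, t <- b].

Definition delta_exp (j : 'I_3) : 'I_3 -> nat := fun i => if i == j then 1%N else 0%N.
Definition zero_exp : 'I_3 -> nat := fun _ => 0%N.

Definition cx (R : realType) (j : 'I_3) : cpoly R := [:: (1, (delta_exp j, zero_exp))].
Definition cp (R : realType) (j : 'I_3) : cpoly R := [:: (1, (zero_exp, delta_exp j))].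

Definition i0 : 'I_3 := @Ordinal 3 0 isT.
Definition i1 : 'I_3 := @Ordinal 3 1 isT.
Definition i2 : 'I_3 := @Ordinal 3 2 isT.

(* classical angular momentum l = x /\ p  (indices 0,1,2 stand for 1,2,3) *)
Definition cl1 (R : realType) : cpoly R :=
  cpoly_sub (cpoly_mul (cx R i1) (cp R i2)) (cpoly_mul (cx R i2) (cp R i1)).
Definition cl2 (R : realType) : cpoly R :=
  cpoly_sub (cpoly_mul (cx R i2) (cp R i0)) (cpoly_mul (cx R i0) (cp R i2)).
Definition cl3 (R : realType) : cpoly R :=
  cpoly_sub (cpoly_mul (cx R i0) (cp R i1)) (cpoly_mul (cx R i1) (cp R i0)).

Definition cl_sq (R : realType) : cpoly R :=
  cpoly_add (cpoly_mul (cl1 R) (cl1 R))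
    (cpoly_add (cpoly_mul (cl2 R) (cl2 R)) (cpoly_mul (cl3 R) (cl3 R))).

(* Shubin tau-quantization, with tau kept as the polynomial variable 'X of {poly A}:
   Op_tau(x_j^m p_j^n) = sum_k C(n,k) tau^(n-k) (1-tau)^k  P_j^k X_j^m P_j^(n-k). *)
Definition Optau1 (R : realType) (A : algType R[i]) (X P : 'I_3 -> A)
    (j : 'I_3) (m n : nat) : {poly A} :=
  \sum_(k < n.+1) ((('C(n, k))%:R : {poly A}) * 'X ^+ (n - k) * (1 - 'X) ^+ k
                   * (P j ^+ k * X j ^+ m * P j ^+ (n - k))%:P).

Definition Optau_mono (R : realType) (A : algType R[i]) (X P : 'I_3 -> A)
    (m : mono) : {poly A} :=
  \prod_(j < 3) Optau1 X P j (m.1 j) (m.2 j).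

Definition Optau (R : realType) (A : algType R[i]) (X P : 'I_3 -> A)
    (a : cpoly R) : {poly A} :=
  \sum_(t <- a) (((t.1%:C)%:A)%:P * Optau_mono X P t.2).

(* Born--Jordan: integrate the tau-polynomial over [0,1] (Lebesgue integral). *)
Definition tau_moment (R : realType) (n : nat) : R :=
  Rintegral (@lebesgue_measure R) `[0, 1]%classic (fun t : R => t ^+ n).

Definition OpBJ (R : realType) (A : algType R[i]) (X P : 'I_3 -> A)
    (a : cpoly R) : A :=
  let q := Optau X P a in \sum_(n < size q) ((tau_moment R n)%:C *: q`_n).

Definition qlvec (R : realType) (A : algType R[i]) (X P : 'I_3 -> A) (j : 'I_3) : A :=
  if j == i0 then X i1 * P i2 - X i2 * P i1
  else if j == i1 then X i2 * P i0 - X i0 * P i2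
  else X i0 * P i1 - X i1 * P i0.

Definition ql_sq (R : realType) (A : algType R[i]) (X P : 'I_3 -> A) : A :=
  qlvec X P i0 ^+ 2 + qlvec X P i1 ^+ 2 + qlvec X P i2 ^+ 2.

(* Main.v *)
Require Import Defs.
From HB Require Import structures.
From mathcomp Require Import all_boot all_order all_algebra.
From mathcomp Require Import all_classical all_reals all_analysis.
From mathcomp Require Import complex unstable.
From mathcomp Require Import ring.
Import Order.TTheory GRing.Theory Num.Theory.
Local Open Scope ring_scope.
Local Open Scope complex_scope.

Lemma zid (V : zmodType) (T1 T2 p s1 s2 q u w : V) : w + w = s1 + s2 ->
  T1 + (-(p + w + q) + (-(p + w + q) + (T2 + u))) =
  T1 - (p + s2) - (p + s1 - T2) + (-(q *+ 2) + u).
Proof.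
move=> hw.
rewrite [in RHS]opprB -[in RHS]addrA -[in RHS]addrA; congr (_ + _).
rewrite -[in RHS]addrA [in LHS](addrCA _ T2) [in LHS](addrCA _ T2).
rewrite [in RHS](addrCA (-(p + s2))); congr (_ + _).
rewrite [in LHS]addrA -[in LHS]opprD [in RHS]addrA -[in RHS]opprD [in RHS]addrA -[in RHS]opprD.
congr (- _ + _).
rewrite [in LHS]addrACA [p + w + (p + w)]addrACA hw mulr2n; congr (_ + _).
by rewrite [in RHS]addrACA [s2 + s1]addrC.
Qed.

Section S.
Variables (R : realType) (A : algType R[i]) (X P : 'I_3 -> A).

Definition mom n : R[i] := (tau_moment R n)%:C.
Definition Lf (q : {poly A}) : A := \sum_(n < size q) (mom n *: q`_n).

Lemma OpBJE a : OpBJ X P a = Lf (Optau X P a).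
Proof. by []. Qed.

Lemma prod3 (F : 'I_3 -> {poly A}) : \prod_(j<3) F j = F i0 * F i1 * F i2.
Proof.
rewrite big_ord_recl big_ord_recl big_ord_recl big_ord0 mulr1 mulrA.
by congr (F _ * F _ * F _); apply: val_inj.
Qed.

Lemma LfE {N} {q : {poly A}} : (size q <= N)%N -> Lf q = \sum_(n < N) (mom n *: q`_n).
Proof.
move=> sq; rewrite /Lf (big_ord_widen N (fun n => mom n *: q`_n) sq) big_mkcond /=.
apply: eq_bigr => i _; case: ltnP => // h.
by rewrite nth_default // scaler0.
Qed.

Lemma Lf0 : Lf 0 = 0.
Proof. by rewrite /Lf size_poly0 big_ord0. Qed.

Lemma LfD (p q : {poly A}) : Lf (p + q) = Lf p + Lf q.
Proof.
rewrite (LfE (leq_maxl (size p) (size q))) (LfE (leq_maxr (size p) (size q))).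
rewrite (LfE (size_polyD p q)) -big_split /=.
by apply: eq_bigr => i _; rewrite coefD scalerDr.
Qed.

Lemma LfCM (k : A) (q : {poly A}) : Lf (k%:P * q) = k * Lf q.
Proof.
have h : (size (k%:P * q)%R <= size q)%N.
  apply: leq_trans (size_mul_leq _ _) _; rewrite size_polyC.
  by case: (k != 0); rewrite ?add1n ?add0n //= leq_pred.
rewrite (LfE h) /Lf mulr_sumr; apply: eq_bigr => i _.
by rewrite coefCM scalerAr.
Qed.

Lemma LfC (k : A) : Lf k%:P = mom 0 *: k.
Proof.
rewrite (LfE (_ : size k%:P <= 1)%N) ?size_polyC ?leq_b1 //.
by rewrite big_ord1 coefC.
Qed.

Lemma LfXC (k : A) : Lf ('X * k%:P) = mom 1 *: k.
Proof.
have h : (size ('X * k%:P)%R <= 2)%N.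
  apply: leq_trans (size_mul_leq _ _) _; rewrite size_polyX size_polyC.
  by case: (k != 0).
rewrite (LfE h) !big_ord_recr big_ord0 /= !coefXM /= coefC /= scaler0 !add0r.
done.
Qed.

Lemma LfX2C (k : A) : Lf ('X^2 * k%:P) = mom 2 *: k.
Proof.
have h : (size ('X^2 * k%:P)%R <= 3)%N.
  apply: leq_trans (size_mul_leq _ _) _; rewrite size_polyXn size_polyC.
  by case: (k != 0).
rewrite (LfE h) !big_ord_recr big_ord0 /= !coefXnM /= coefC /= !scaler0 !add0r.
done.
Qed.

Lemma O_m0 j m : Optau1 X P j m 0 = (X j ^+ m)%:P.
Proof.
rewrite /Optau1 big_ord1 /= subn0 bin0 !expr0 !mulr1 !mul1r.
by [].
Qed.

Lemma O_0n j n : Optau1 X P j 0 n = (P j ^+ n)%:P.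
Proof.
rewrite /Optau1.
transitivity (\sum_(k < n.+1) (('C(n,k))%:R * 'X ^+ (n-k) * (1-'X)^+k) * (P j ^+ n)%:P).
  apply: eq_bigr => k _; rewrite expr0 mulr1 -exprD subnKC // -ltnS //.
rewrite -mulr_suml.
suff -> : \sum_(k < n.+1) (('C(n,k))%:R * 'X ^+ (n-k) * (1-'X)^+k) = 1 :> {poly A}.
  by rewrite mul1r.
transitivity (('X + (1 - 'X)) ^+ n : {poly A}); last by rewrite subrKC expr1n.
rewrite exprDn_comm; last first.
  exact/commr_sym/commr_polyX.
by apply: eq_bigr => k _; rewrite -mulrA mulr_natl.
Qed.

Lemma O_11 j : Optau1 X P j 1 1 = (P j * X j)%:P + 'X * (X j * P j - P j * X j)%:P.
Proof.
rewrite /Optau1 big_ord_recr big_ord1 /= subn0 subnn bin0 binn !expr0 !expr1 !mulr1 !mul1r.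
by rewrite polyCB mulrBr mulrBl mul1r addrCA.
Qed.
Lemma tau_momentE n : tau_moment R n = n.+1%:R^-1.
Proof.
rewrite /tau_moment.
transitivity (\int[lebesgue_measure]_(x in `[0, 1]) (XMonemX n 0 x) : R).
  by apply: eq_Rintegral => x _; rewrite XMonemXn0.
rewrite Rintegration_by_substitution_onem ?lexx ?ler01//=.
- rewrite onem1 -Rintegral_onemXn; apply: eq_Rintegral => x _.
  by rewrite XMonemXC XMonemX0n.
- exact: within_continuous_XMonemX.
Qed.

Lemma mom0 : mom 0 = 1.
Proof. by rewrite /mom tau_momentE invr1. Qed.

Lemma Lcross (a b : A) (c : R[i]) :
  Lf ((a%:P + 'X * (c%:A)%:P) * (b%:P + 'X * (c%:A)%:P)) =
  a * b + mom 1 *: (a * c%:A + c%:A * b) + mom 2 *: (c%:A * c%:A).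
Proof.
rewrite mulrDl !mulrDr !LfD -polyCM LfC mom0 scale1r.
rewrite (mulrA a%:P 'X) (commr_polyX a%:P) -mulrA -polyCM LfXC.
rewrite -mulrA -polyCM LfXC.
rewrite mulrA -(mulrA 'X _ 'X) (commr_polyX (c%:A)%:P) mulrA -expr2 -mulrA -polyCM LfX2C.
by rewrite scalerDr !addrA.
Qed.
End S.

Section T.
Variables (R : realType) (A : algType R[i]) (X P : 'I_3 -> A) (c : R[i]).
Hypothesis hXP : forall j k : 'I_3, X j * P k - P k * X j = (if j == k then c%:A else 0).
Hypothesis hXX : forall j k : 'I_3, X j * X k = X k * X j.
Hypothesis hPP : forall j k : 'I_3, P j * P k = P k * P j.

Lemma cXP {j k : 'I_3} : j != k -> X j * P k = P k * X j.
Proof. by move/negbTE=> h; apply/eqP; rewrite -subr_eq0 hXP h. Qed.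

Lemma XPjj j : X j * P j = P j * X j + c%:A.
Proof. by have := hXP j j; rewrite eqxx => <-; rewrite subrKC. Qed.

Lemma L1 a b : a != b -> X a * P b * (X a * P b) = X a ^+ 2 * P b ^+ 2.
Proof.
move=> hab.
by rewrite mulrA -(mulrA (X a)) -(cXP hab) mulrA -expr2 -mulrA -expr2.
Qed.

Lemma L2 a b : a != b -> X b * P a * (X b * P a) = P a ^+ 2 * X b ^+ 2.
Proof.
move=> hab; have hba : b != a by rewrite eq_sym.
rewrite L1 //. 
have cm : GRing.comm (X b) (P a) := cXP hba.
exact/commr_sym/commrX/commr_sym/commrX.
Qed.

Lemma L3 a b : a != b -> X a * P b * (X b * P a) = (P a * X a + c%:A) * (P b * X b).
Proof.
move=> hab; have hba : b != a by rewrite eq_sym.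
rewrite [in LHS](cXP hba) [in LHS]mulrA -[in LHS](mulrA (X a) (P b) (P a)) [in LHS](hPP b a).
by rewrite [in LHS]mulrA -[in LHS]mulrA XPjj.
Qed.

Lemma L4 a b : a != b -> X b * P a * (X a * P b) = P a * X a * (P b * X b + c%:A).
Proof.
move=> hab; have hba : b != a by rewrite eq_sym.
have e : X b * (P a * X a) = P a * X a * X b.
  by rewrite mulrA (cXP hba) -mulrA (hXX b a) mulrA.
rewrite -[in LHS]mulrA [Z in X b * Z](mulrA (P a)) [in LHS]mulrA e -mulrA XPjj.
done.
Qed.

Lemma block a b (h t : R[i]) (u : A) : a != b -> h + h = 1 ->
  X a ^+ 2 * P b ^+ 2 + (- (P a * X a * (P b * X b) + h *: (P a * X a * c%:A + c%:A * (P b * X b)) + t *: (c%:A * c%:A))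
   + (- (P a * X a * (P b * X b) + h *: (P a * X a * c%:A + c%:A * (P b * X b)) + t *: (c%:A * c%:A))
   + (P a ^+ 2 * X b ^+ 2 + u)))
  = (X a * P b - X b * P a) ^+ 2 + (- (t *: (c%:A * c%:A) *+ 2) + u).
Proof.
move=> hab hh.
rewrite [(_ - _) ^+ 2]expr2 mulrBl !mulrBr L1 // L2 // L3 // L4 // mulrDl mulrDr.
by apply: zid; rewrite -scalerDl hh scale1r.
Qed.

Lemma swap4 (x y z w u : A) : x + (y + (z + (w + u))) = w + (y + (z + (x + u))).
Proof.
rewrite [in LHS]addrCA [in RHS]addrCA; congr (_ + _).
rewrite [in LHS]addrCA [in RHS]addrCA; congr (_ + _).
exact: addrCA.
Qed.

Lemma block' a b (h t : R[i]) (u : A) : a != b -> h + h = 1 ->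
  P a ^+ 2 * X b ^+ 2 + (- (P a * X a * (P b * X b) + h *: (P a * X a * c%:A + c%:A * (P b * X b)) + t *: (c%:A * c%:A))
   + (- (P a * X a * (P b * X b) + h *: (P a * X a * c%:A + c%:A * (P b * X b)) + t *: (c%:A * c%:A))
   + (X a ^+ 2 * P b ^+ 2 + u)))
  = (X b * P a - X a * P b) ^+ 2 + (- (t *: (c%:A * c%:A) *+ 2) + u).
Proof.
move=> hab hh.
by rewrite -opprB sqrrN -(block a b h t u hab hh) swap4.
Qed.
End T.

Lemma scal (R : realType) (hbar : R) (m2 c : R[i]) : m2 = (3%:R^-1)%:C -> c = 'i * hbar%:C ->
  - (m2 * (c * c) *+ 2) - m2 * (c * c) *+ 2 - m2 * (c * c) *+ 2 = (2 * hbar ^+ 2)%:C.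
Proof.
move=> -> ->.
have hc : 'i * hbar%:C * ('i * hbar%:C) = (- hbar ^+ 2)%:C.
  by rewrite mulrACA -expr2 sqr_i mulN1r rmorphN rmorphXn.
rewrite hc -(rmorphM (real_complex R)) -(rmorphMn (real_complex R)).
rewrite -(rmorphN (real_complex R)) -!(rmorphD (real_complex R)); congr (_%:C).
by rewrite !mulr2n; field.
Qed.

Theorem mainTheorem1 (R : realType) (A : algType R[i]) (hbar : R) (X P : 'I_3 -> A) :
  0 < hbar ->
  (forall j k : 'I_3, X j * P k - P k * X j = (if j == k then ('i * hbar%:C)%:A else 0)) ->
  (forall j k : 'I_3, X j * X k = X k * X j) ->
  (forall j k : 'I_3, P j * P k = P k * P j) ->
  OpBJ X P (cl_sq R) = ql_sq X P + ((2 * hbar ^+ 2)%:C)%:A.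
Proof.
move=> hpos hXP hXX hPP.
rewrite OpBJE /Optau /cl_sq /cl1 /cl2 /cl3 /cpoly_mul /cpoly_sub /cpoly_add /cpoly_scale /cx /cp /=.
rewrite !big_cons big_nil /Optau_mono !prod3 /mono_mul /delta_exp /zero_exp /i0 /i1 /i2 /=.
rewrite !LfD Lf0 !LfCM !addn0 !add0n.
rewrite !mulr1 !mul1r mulrNN !mul1r.
rewrite !rmorphN !rmorph1 scaleN1r scale1r !mul1r !mulN1r.
rewrite !O_11 !O_0n !O_m0 !expr0 !polyC1 !mulr1 !mul1r !hXP !eqxx.
rewrite -!polyCM !LfC mom0 !scale1r !Lcross.
rewrite /ql_sq /qlvec /=.
have hh : mom R 1 + mom R 1 = 1.
  rewrite /mom tau_momentE -rmorphD.
  have -> : (2%:R^-1 + 2%:R^-1 : R) = 1 by field.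
  by rewrite rmorph1.
change (1 + 1)%N with 2%N.
rewrite (@block R A X P ('i * hbar%:C) hXP hXX hPP i1 i2 (mom R 1) (mom R 2)) //.
rewrite (@block' R A X P ('i * hbar%:C) hXP hXX hPP i0 i2 (mom R 1) (mom R 2)) //.
rewrite (@block R A X P ('i * hbar%:C) hXP hXX hPP i0 i1 (mom R 1) (mom R 2)) //.
set K := (mom R 2 *: _) *- 2.
have hK : K + K + K = ((2 * hbar ^+ 2)%:C)%:A.
  rewrite /K mulr_algl scalerA scalerA !scalerMnl -!scaleNr -!scalerDl.
  congr (_ *: 1).
  by apply: scal => //; rewrite /mom tau_momentE.
rewrite addr0 -hK.
set x := (X i1 * P i2 - _) ^+ 2; set y := (X i2 * P i0 - _) ^+ 2; set z := (X i0 * P i1 - _) ^+ 2.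
by rewrite !addrA (addrAC x K y) (addrAC (x + y + K) K z) (addrAC (x + y) K z).
Qed.
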